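(* Let $p>1$, $1/p+1/q=1$, let $\{(x_i,y_i)\}_{i=1}^n\subset\mathbb{R}^d\times\{\pm1\}$ be linearly separable with $\max_i\|x_i\|_q\le C$, and let $L(w)=\frac1n\sum_i\exp(-y_i\langle w,x_i\rangle)$ (exponential loss). Let $w_t$ be the iterates of $p$-GD with step size $\eta$ small enough that $\psi-\eta L$ is convex (at least locally at the iterates). Then $\|w_t\|_p\in\Theta(\log t)$; more precisely, $$\|w_t\|_p\ge\frac1C\left(\log t-p\log\log t\right)+O(1)\quad\text{as }t\to\infty,\qquad \limsup_{t\to\infty}\frac{\|w_t\|_p}{\log t}\le\hat\gamma_p^{-1}\frac{p}{p-1}.$$
   Context: $\psi(w)=\frac1p\|w\|_p^p$; $p$-GD is the iteration $\nabla\psi(w_{t+1})=\nabla\psi(w_t)-\eta\nabla L(w_t)$ from some initialization $w_0$. The max-margin direction is $\bar w^{\mathrm{mm}}_p=\arg\max_{\|w\|_p\le1}\min_i y_i\langle x_i,w\rangle$ and $\hat\gamma_p>0$ is the optimal value of this maximization (the max margin). *)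

(* Defs.v *)
From HB Require Import structures.
From mathcomp Require Import all_boot all_order all_algebra.
From mathcomp Require Import all_classical all_reals all_analysis.
Set Implicit Arguments. Unset Strict Implicit. Unset Printing Implicit Defensive.
Import Order.TTheory GRing.Theory Num.Theory.
Local Open Scope ring_scope.
Local Open Scope classical_set_scope.

Section Defs.
Variables (R : realType) (d : nat).
Definition vec := 'I_d -> R.

Definition inner (w x : vec) : R := \sum_(j < d) w j * x j.

Definition pnorm (p : R) (w : vec) : R := (\sum_(j < d) `|w j| `^ p) `^ p^-1.

Definition psi (p : R) (w : vec) : R := p^-1 * \sum_(j < d) `|w j| `^ p.

Definition grad_psi (p : R) (w : vec) : vec :=
  fun j => Num.sg (w j) * `|w j| `^ (p - 1).

Definition expL (n : nat) (x : 'I_n -> vec) (y : 'I_n -> R) (w : vec) : R :=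
  n%:R^-1 * \sum_(i < n) expR (- (y i * inner w (x i))).

Definition grad_expL (n : nat) (x : 'I_n -> vec) (y : 'I_n -> R) (w : vec) : vec :=
  fun j => - (n%:R^-1 * \sum_(i < n) expR (- (y i * inner w (x i))) * y i * x i j).

Definition convex_on (S : set vec) (f : vec -> R) : Prop :=
  forall u v, S u -> S v -> forall l : R, 0 <= l <= 1 ->
    f (fun j => l * u j + (1 - l) * v j) <= l * f u + (1 - l) * f v.

Definition segment (u v : vec) : set vec :=
  [set z | exists2 s : R, 0 <= s <= 1 & z = (fun j => (1 - s) * u j + s * v j)].

Definition pGD (p eta : R) (n : nat) (x : 'I_n -> vec) (y : 'I_n -> R)
  (w : nat -> vec) : Prop :=
  forall t j, grad_psi p (w t.+1) j = grad_psi p (w t) j - eta * grad_expL x y (w t) j.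

Definition lin_separable (n : nat) (x : 'I_n -> vec) (y : 'I_n -> R) : Prop :=
  exists w : vec, forall i, 0 < y i * inner (x i) w.

(* max margin: optimal value of max_{||w||_p <= 1} min_i y_i <x_i, w>,
   written as the sup of all m with m <= y_i <x_i,w> for all i, ||w||_p <= 1 *)
Definition max_margin (p : R) (n : nat) (x : 'I_n -> vec) (y : 'I_n -> R) : R :=
  sup [set m : R | exists w : vec, pnorm p w <= 1 /\
                   forall i, m <= y i * inner (x i) w].
End Defs.

(* Main.v *)
Require Import Defs.
From HB Require Import structures.
From mathcomp Require Import all_boot all_order all_algebra.
From mathcomp Require Import all_classical all_reals all_analysis.
From mathcomp Require Import ring lra.
Import Order.TTheory GRing.Theory Num.Theory.
Local Open Scope ring_scope.
Local Open Scope classical_set_scope.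



Section Aux.
Variables (R : realType) (d : nat).
Local Notation vec := (vec R d).
Local Notation inner := (@inner R d).

Lemma inner_sym (a b : vec) : inner a b = inner b a.
Proof. by apply: eq_bigr => j _; rewrite mulrC. Qed.

Lemma inner_lin (a b : R) (u v x : vec) :
  inner (fun j => a * u j + b * v j) x = a * inner u x + b * inner v x.
Proof.
rewrite /Defs.inner !mulr_sumr -big_split /=; apply: eq_bigr => j _; ring.
Qed.

Lemma inner_linr (a b : R) (u v x : vec) :
  inner x (fun j => a * u j + b * v j) = a * inner x u + b * inner x v.
Proof. by rewrite inner_sym inner_lin !(inner_sym x). Qed.

Lemma inner_scale (a : R) (u x : vec) :
  inner (fun j => a * u j) x = a * inner u x.
Proof. rewrite /Defs.inner mulr_sumr; apply: eq_bigr => j _; ring. Qed.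

Lemma inner_comb (a b c : vec) (e : R) v :
  (forall j, a j = b j - e * c j) -> inner a v = inner b v - e * inner c v.
Proof.
move=> H; rewrite /Defs.inner mulr_sumr -sumrB; apply: eq_bigr => j _.
rewrite H; ring.
Qed.

Lemma gradL_inner n (x : 'I_n -> vec) (y : 'I_n -> R) (w v : vec) :
  inner (grad_expL x y w) v =
  - (n%:R^-1 * \sum_(i < n) expR (- (y i * inner w (x i))) * y i * inner v (x i)).
Proof.
rewrite /Defs.inner /grad_expL.
transitivity (\sum_(j < d) \sum_(i < n)
   - (n%:R^-1 * (expR (- (y i * inner w (x i))) * y i * x i j * v j))).
  apply: eq_bigr => j _.
  rewrite mulNr -mulrA mulr_suml mulr_sumr -sumrN; apply: eq_bigr => i _; ring.
rewrite exchange_big /=; symmetry; rewrite mulr_sumr -sumrN; apply: eq_bigr => i _.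
rewrite /Defs.inner !mulr_sumr -sumrN; apply: eq_bigr => j _; ring.
Qed.

Lemma expR_up (v : R) : v <= 2^-1 -> expR v <= 1 + v + 2 * v ^+ 2.
Proof.
move=> hv.
have h1 : 1 - v <= expR (- v) by have := expR_ge1Dx (- v).
have h2 : expR v * expR (- v) = 1 by rewrite expRxMexpNx_1.
have e0 : 0 < expR v := expR_gt0 v.
have h3 : expR v * (1 - v) <= 1 by nra.
have h4 : 1 <= (1 - v) * (1 + v + 2 * v ^+ 2).
  have : 0 <= v ^+ 2 * (1 - 2 * v) by apply: mulr_ge0; [exact: sqr_ge0| lra].
  move=> h; nra.
nra.
Qed.

Lemma powRV (x r : R) : 0 <= x -> (x^-1) `^ r = (x `^ r)^-1.
Proof. by move=> x0; rewrite -powR_inv1 // powRAC powR_inv1 // powR_ge0. Qed.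

Lemma sg_pow_self (p a : R) : 0 < p -> Num.sg a * `|a| `^ (p - 1) * a = `|a| `^ p.
Proof. by move=> p0; rewrite mulrAC -normrEsg mulr_powRB1. Qed.

Lemma tangent_scalar (p a b : R) : 1 < p ->
  p^-1 * `|a| `^ p + Num.sg a * `|a| `^ (p - 1) * (b - a) <= p^-1 * `|b| `^ p.
Proof.
move=> p1; have p0 : 0 < p by lra.
have [->|a0] := eqVneq a 0.
  rewrite sgr0 !mul0r normr0 powR0 ?gt_eqF // mulr0 addr0.
  by rewrite mulr_ge0 // ?invr_ge0 ?ltW // powR_ge0.
have h1 := @sg_pow_self p a p0.
have h2 : Num.sg a * `|a| `^ (p - 1) * b <= `|a| `^ (p - 1) * `|b|.
  apply: le_trans (ler_norm _) _.
  by rewrite !normrM normr_sg a0 mul1r norm_powR ?normr_id.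
set q' := p / (p - 1).
have pm1 : p - 1 != 0 by rewrite subr_eq0 gt_eqF.
have hq : q'^-1 = 1 - p^-1 by rewrite /q'; field; rewrite gt_eqF.
have q0 : 0 < q' by rewrite /q' divr_gt0 // subr_gt0.
have h3 := @conjugate_powR R (`|a| `^ (p - 1)) `|b| q' p (powR_ge0 _ _) (normr_ge0 _)
   q0 p0 ltac:(by rewrite hq subrK).
rewrite -powRrM (_ : (p - 1) * q' = p) in h3; last by rewrite /q'; field.
rewrite -[_ / q']/(_ * q'^-1) hq in h3.
rewrite mulrBr h1.
move: h1 h2 h3; set A := `|a| `^ p; set B := `|b| `^ p.
set X := Num.sg a * _; set Y := `|a| `^ (p - 1) * `|b|.
move=> _ h2 h3.
have e : B / p = p^-1 * B by rewrite mulrC.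
rewrite e in h3; lra.
Qed.

Lemma psi_tangent (p : R) (w v : vec) : 1 < p ->
  psi p w + (inner (grad_psi p w) v - inner (grad_psi p w) w) <= psi p v.
Proof.
move=> p1.
have -> : psi p w + (inner (grad_psi p w) v - inner (grad_psi p w) w) =
  \sum_(j < d) (p^-1 * `|w j| `^ p + Num.sg (w j) * `|w j| `^ (p - 1) * (v j - w j)).
  rewrite /psi /Defs.inner mulr_sumr -sumrB -big_split; apply: eq_bigr => j _.
  by rewrite /grad_psi mulrBr.
rewrite /psi mulr_sumr; apply: ler_sum => j _; exact: tangent_scalar.
Qed.

Lemma grad_psi_self (p : R) (w : vec) : 0 < p ->
  inner (grad_psi p w) w = \sum_(j < d) `|w j| `^ p.
Proof. by move=> p0; apply: eq_bigr => j _; rewrite /grad_psi sg_pow_self. Qed.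

Lemma pnorm_ge0 (p : R) (v : vec) : 0 <= pnorm p v.
Proof. exact: powR_ge0. Qed.

Lemma pnorm_pow (p : R) (v : vec) : 0 < p -> pnorm p v `^ p = \sum_(j < d) `|v j| `^ p.
Proof.
move=> p0; rewrite /pnorm -powRrM mulVf ?gt_eqF // powRr1 //.
by apply: sumr_ge0 => j _; exact: powR_ge0.
Qed.

Lemma sum_zero_vec (p : R) (a : vec) : 0 < p ->
  \sum_(j < d) `|a j| `^ p = 0 -> forall j, a j = 0.
Proof.
move=> p0 /eqP; rewrite psumr_eq0; last by move=> j _; exact: powR_ge0.
move=> /allP H j; have /implyP := H j (mem_index_enum j).
move=> /(_ isT) /eqP /powR_eq0_eq0 /eqP; rewrite normr_eq0 => /eqP //.
Qed.

Lemma young_scaled (al be NA NB p q : R) :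
  0 <= al -> 0 <= be -> 0 < NA -> 0 < NB -> 0 < p -> 0 < q -> p^-1 + q^-1 = 1 ->
  al * be <= NA * NB / (p * NA `^ p) * al `^ p + NA * NB / (q * NB `^ q) * be `^ q.
Proof.
move=> a0 b0 NAp NBp p0 q0 pq.
have := @conjugate_powR R (al / NA) (be / NB) p q
    ltac:(by rewrite divr_ge0 // ltW) ltac:(by rewrite divr_ge0 // ltW) p0 q0 pq.
have iA : 0 <= NA^-1 by rewrite invr_ge0 ltW.
have iB : 0 <= NB^-1 by rewrite invr_ge0 ltW.
rewrite (powRM _ a0 iA) (powRM _ b0 iB) !powRV ?(ltW NAp) ?(ltW NBp) //.
have hA : 0 < NA `^ p by apply: powR_gt0.
have hB : 0 < NB `^ q by apply: powR_gt0.
move: hA hB; set X := NA `^ p; set Y := NB `^ q; set U := al `^ p; set V := be `^ q.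
move=> hA hB h.
have h' := h; rewrite -(ler_pM2l (mulr_gt0 NAp NBp)) in h'.
apply: (le_trans _ (le_trans h' _)).
  by rewrite le_eqVlt; apply/orP; left; apply/eqP; field; rewrite !gt_eqF.
by rewrite le_eqVlt; apply/orP; left; apply/eqP; field; rewrite !gt_eqF.
Qed.

Lemma hoelder_sum (p q : R) (a b : vec) : 1 < p -> p^-1 + q^-1 = 1 ->
  \sum_(j < d) `|a j| * `|b j| <= pnorm p a * pnorm q b.
Proof.
move=> p1 pq; have p0 : 0 < p by lra.
have ip1 : p^-1 < 1 by rewrite invf_lt1.
have q0 : 0 < q by rewrite -invr_gt0; lra.
set A := \sum_(j < d) `|a j| `^ p; set B := \sum_(j < d) `|b j| `^ q.
have A0 : 0 <= A by apply: sumr_ge0 => j _; exact: powR_ge0.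
have B0 : 0 <= B by apply: sumr_ge0 => j _; exact: powR_ge0.
have [Az|Anz] := eqVneq A 0.
  have H := @sum_zero_vec p a p0 Az.
  rewrite big1 ?mulr_ge0 ?pnorm_ge0 // => j _; by rewrite H normr0 mul0r.
have [Bz|Bnz] := eqVneq B 0.
  have H := @sum_zero_vec q b q0 Bz.
  rewrite big1 ?mulr_ge0 ?pnorm_ge0 // => j _; by rewrite H normr0 mulr0.
have Ap : 0 < A by rewrite lt_neqAle eq_sym Anz.
have Bp : 0 < B by rewrite lt_neqAle eq_sym Bnz.
set NA := pnorm p a; set NB := pnorm q b.
have NAp : 0 < NA by exact: powR_gt0.
have NBp : 0 < NB by exact: powR_gt0.
have NAA : NA `^ p = A by exact: pnorm_pow.
have NBB : NB `^ q = B by exact: pnorm_pow.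
have key : forall j, `|a j| * `|b j| <=
    (NA * NB / (p * A)) * `|a j| `^ p + (NA * NB / (q * B)) * `|b j| `^ q.
  move=> j; have := @young_scaled `|a j| `|b j| NA NB p q (normr_ge0 _) (normr_ge0 _) NAp NBp p0 q0 pq.
  by rewrite NAA NBB.
apply: le_trans (ler_sum _ (fun j _ => key j)) _.
rewrite big_split /= -!mulr_sumr -/A -/B le_eqVlt; apply/orP; left; apply/eqP.
have -> : NA * NB / (p * A) * A + NA * NB / (q * B) * B = NA * NB * (p^-1 + q^-1).
  by field; rewrite !gt_eqF.
by rewrite pq mulr1.
Qed.

End Aux.



Section Opt.
Variables (R : realType) (d n : nat) (p eta : R) (x : 'I_n -> vec R d) (y : 'I_n -> R).
Local Notation vec := (vec R d).
Local Notation inner := (@inner R d).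
Local Notation L := (expL x y).
Local Notation gL := (grad_expL x y).
Local Notation G := (grad_psi p).
Definition Dp (u v : vec) := psi p u - psi p v - (inner (G v) u - inner (G v) v).

Lemma exp_tangent (a b : R) : expR a * (1 + (b - a)) <= expR b.
Proof.
have -> : expR b = expR a * expR (b - a) by rewrite -expRD addrC subrK.
by rewrite ler_wpM2l ?expR_ge0 // expR_ge1Dx.
Qed.

Lemma expL_tangent (u v : vec) : L v + (inner (gL v) u - inner (gL v) v) <= L u.
Proof.
have -> : L v + (inner (gL v) u - inner (gL v) v) =
   n%:R^-1 * \sum_(i < n) expR (- (y i * inner v (x i))) *
      (1 + (- (y i * inner u (x i)) - - (y i * inner v (x i)))).
  rewrite /expL !gradL_inner !mulr_sumr -!sumrN -!big_split /=.
  apply: eq_bigr => i _; ring.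
rewrite /expL ler_wpM2l ?invr_ge0 ?ler0n //; apply: ler_sum => i _.
exact: exp_tangent.
Qed.

Lemma small_le (X Y K l0 : R) : 0 < l0 -> 0 <= K ->
  (forall l, 0 < l -> l <= l0 -> X - l * K <= Y) -> X <= Y.
Proof.
move=> l00 K0 H; rewrite leNgt; apply/negP => hXY.
set t := (X - Y) / (K + 1).
have t0 : 0 < t by rewrite /t divr_gt0 //; lra.
have tK : t * (K + 1) = X - Y by rewrite /t mulfVK // gt_eqF //; lra.
set l := Num.min l0 t.
have l0p : 0 < l by rewrite lt_min l00 t0.
have hl1 : l <= l0 by rewrite ge_min lexx.
have hl2 : l <= t by rewrite ge_min lexx orbT.
have := H l l0p hl1.
have : l * K <= t * K by rewrite ler_wpM2r.
nra.
Qed.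

Lemma step_convex (w0 w1 : vec) : 1 < p -> 0 < eta ->
  convex_on (segment w0 w1) (fun v => psi p v - eta * L v) ->
  eta * (L w1 - L w0 - (inner (gL w0) w1 - inner (gL w0) w0)) <= Dp w1 w0.
Proof.
move=> p1 eta0 hconv.
set g := fun v => psi p v - eta * L v.
have hseg : forall l, 0 <= l <= 1 ->
    g (fun j => l * w1 j + (1 - l) * w0 j) <= l * g w1 + (1 - l) * g w0.
  move=> l hl; apply: hconv => //.
    exists 1; first by rewrite ler01 lexx.
    by apply: funext => j; rewrite subrr mul0r add0r mul1r.
  exists 0; first by rewrite lexx ler01.
  by apply: funext => j; rewrite subr0 mul1r mul0r addr0.
set c := fun i => - (y i * inner w0 (x i)).
set dl := fun i => - (y i * (inner w1 (x i) - inner w0 (x i))).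
set K := n%:R^-1 * \sum_(i < n) 2 * expR (c i) * dl i ^+ 2.
set S := \sum_(i < n) `|dl i|.
have S0 : 0 <= S by apply: sumr_ge0 => i _; exact: normr_ge0.
have K0 : 0 <= K.
  apply: mulr_ge0; first by rewrite invr_ge0 ler0n.
  apply: sumr_ge0 => i _; apply: mulr_ge0; last exact: sqr_ge0.
  by apply: mulr_ge0; [lra | exact: expR_ge0].
set dL := inner (gL w0) w1 - inner (gL w0) w0.
have dLE : dL = n%:R^-1 * \sum_(i < n) expR (c i) * dl i.
  rewrite /dL !gradL_inner !mulr_sumr -!sumrN -!big_split /=.
  apply: eq_bigr => i _; rewrite /c /dl; ring.
set dpsi := inner (G w0) w1 - inner (G w0) w0.
suff H : dpsi - eta * dL <= g w1 - g w0.
  by move: H; rewrite /Dp /g /dpsi /dL; lra.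
apply: (@small_le (dpsi - eta * dL) (g w1 - g w0) (eta * K)
          ((2 * (1 + S))^-1)).
- by rewrite invr_gt0; lra.
- by rewrite mulr_ge0 // ltW.
move=> l l0 hl.
have hl01 : 0 <= l <= 1.
  rewrite (ltW l0) /=; apply: (le_trans hl).
  rewrite invf_le1; lra.
set z := fun j => l * w1 j + (1 - l) * w0 j.
have hz := hseg l hl01; rewrite -/z in hz.
have hpsi := @psi_tangent R d p w0 z p1.
rewrite /z inner_linr in hpsi.
have hLz : L z <= L w0 + l * dL + l ^+ 2 * K.
  have -> : L w0 + l * dL + l ^+ 2 * K = n%:R^-1 * \sum_(i < n)
       expR (c i) * (1 + l * dl i + 2 * (l * dl i) ^+ 2).
    rewrite dLE /K /expL !mulr_sumr -!big_split /=; apply: eq_bigr => i _.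
    rewrite /c; ring.
  rewrite /expL ler_wpM2l ?invr_ge0 ?ler0n //; apply: ler_sum => i _.
  have -> : - (y i * inner z (x i)) = c i + l * dl i.
    rewrite /z inner_lin /c /dl; ring.
  rewrite expRD ler_wpM2l ?expR_ge0 //; apply: expR_up.
  have hi : `|dl i| <= S.
    rewrite /S (bigD1 i) //= lerDl; apply: sumr_ge0 => k _; exact: normr_ge0.
  have : l * dl i <= l * (1 + S).
    apply: ler_wpM2l; first exact: ltW.
    apply: le_trans (ler_norm _) _; lra.
  have : l * (1 + S) <= (2 * (1 + S))^-1 * (1 + S) by apply: ler_wpM2r; lra.
  have -> : (2 * (1 + S))^-1 * (1 + S) = 2^-1 by field; lra.
  lra.
have key : l * dpsi - eta * (l * dL + l ^+ 2 * K) <= l * (g w1 - g w0).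
  have e1 : g z = psi p z - eta * L z by [].
  have : eta * L z <= eta * (L w0 + l * dL + l ^+ 2 * K) by rewrite ler_wpM2l // ltW.
  rewrite /dpsi /g; rewrite /g in hz; nra.
have : l * (dpsi - eta * dL - l * (eta * K)) <= l * (g w1 - g w0).
  by apply: le_trans key; rewrite le_eqVlt; apply/orP; left; apply/eqP; ring.
by rewrite ler_pM2l.
Qed.

Lemma Dp_ge0 (u v : vec) : 1 < p -> 0 <= Dp u v.
Proof. move=> p1; have := @psi_tangent R d p v u p1; rewrite /Dp; lra. Qed.

Lemma Dp_self (v : vec) : Dp v v = 0.
Proof. rewrite /Dp; lra. Qed.

Lemma per_step (w0 w1 u : vec) : 1 < p -> 0 < eta ->
  convex_on (segment w0 w1) (fun v => psi p v - eta * L v) ->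
  (forall j, G w1 j = G w0 j - eta * gL w0 j) ->
  eta * (L w1 - L u) <= Dp u w0 - Dp u w1.
Proof.
move=> p1 eta0 hconv hG.
have h1 := step_convex w0 w1 p1 eta0 hconv.
have h2 := expL_tangent u w0.
have h2' : eta * (L w0 + (inner (gL w0) u - inner (gL w0) w0)) <= eta * L u.
  by rewrite ler_wpM2l // ltW.
have e1 := @inner_comb R d (G w1) (G w0) (gL w0) eta u hG.
have e2 := @inner_comb R d (G w1) (G w0) (gL w0) eta w1 hG.
move: h1; rewrite /Dp e1 e2 => h1; lra.
Qed.

Lemma regret (w : nat -> vec) (u : vec) : 1 < p -> 0 < eta ->
  pGD p eta x y w ->
  (forall t, convex_on (segment (w t) (w t.+1)) (fun v => psi p v - eta * L v)) ->
  forall T : nat, eta * T%:R * L (w T) + Dp u (w T) <= Dp u (w 0%N) + eta * T%:R * L u.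
Proof.
move=> p1 eta0 hgd hconv; elim => [|T IH].
  by rewrite !mulr0 !mul0r add0r addr0.
have hs := @per_step (w T) (w T.+1) u p1 eta0 (hconv T) (hgd T).
have hm : L (w T.+1) <= L (w T).
  have := @per_step (w T) (w T.+1) (w T) p1 eta0 (hconv T) (hgd T).
  rewrite Dp_self; have := Dp_ge0 (w T) (w T.+1) p1 => h0 h.
  have : eta * (L (w T.+1) - L (w T)) <= 0 by lra.
  by rewrite pmulr_rle0 // subr_le0.
have hm' : eta * T%:R * L (w T.+1) <= eta * T%:R * L (w T).
  by rewrite ler_wpM2l // mulr_ge0 // ltW.
rewrite -natr1; lra.
Qed.

End Opt.



Section Asym.
Variables (R : realType) (d : nat).
Local Notation vec := (vec R d).
Local Notation inner := (@inner R d).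

Lemma inner_scaler (a : R) (u v : vec) : inner v (fun j => a * u j) = a * inner v u.
Proof. by rewrite inner_sym inner_scale inner_sym. Qed.

Lemma abs_inner_le (p q : R) (a b : vec) : 1 < p -> p^-1 + q^-1 = 1 ->
  `|inner a b| <= pnorm p a * pnorm q b.
Proof.
move=> p1 pq; apply: le_trans (@hoelder_sum R d p q a b p1 pq).
apply: le_trans (ler_norm_sum _ _ _) _.
by apply: ler_sum => j _; rewrite normrM.
Qed.

Lemma sum_scale (p c : R) (v : vec) : 0 <= c ->
  \sum_(j < d) `|c * v j| `^ p = c `^ p * \sum_(j < d) `|v j| `^ p.
Proof.
move=> c0; rewrite mulr_sumr; apply: eq_bigr => j _.
by rewrite normrM powRM // ger0_norm.
Qed.

Lemma pnorm_scale (p c : R) (v : vec) : 0 < p -> 0 <= c ->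
  pnorm p (fun j => c * v j) = c * pnorm p v.
Proof.
move=> p0 c0; rewrite /pnorm sum_scale // powRM ?powR_ge0 //; last first.
  by apply: sumr_ge0 => j _; exact: powR_ge0.
by rewrite -powRrM mulfV ?gt_eqF // powRr1.
Qed.

Lemma psi_scale (p c : R) (v : vec) : 0 <= c ->
  psi p (fun j => c * v j) = c `^ p * psi p v.
Proof. by move=> c0; rewrite /psi sum_scale // mulrCA. Qed.

Lemma pnorm_zero (p : R) : 0 < p -> pnorm p (fun _ : 'I_d => 0) = 0.
Proof.
move=> p0; rewrite /pnorm big1 ?powR0 // ?invr_neq0 ?gt_eqF //.
by move=> j _; rewrite normr0 powR0 // gt_eqF.
Qed.

Lemma grad_pnorm (p q : R) (w : vec) : 1 < p -> p^-1 + q^-1 = 1 ->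
  pnorm q (grad_psi p w) = pnorm p w `^ (p - 1).
Proof.
move=> p1 pq.
have p0 : 0 < p by lra.
have pm1 : p - 1 != 0 by rewrite subr_eq0 gt_eqF.
have qi : q^-1 = (p - 1) / p.
  have -> : q^-1 = 1 - p^-1 by lra.
  by field; rewrite gt_eqF.
have qE : q = p / (p - 1) by rewrite -[q]invrK qi invf_div.
have hq : (p - 1) * q = p by rewrite qE; field.
rewrite /pnorm -powRrM.
have -> : p^-1 * (p - 1) = q^-1.
  rewrite mulrBr mulVf ?gt_eqF // mulr1; lra.
congr (_ `^ _); apply: eq_bigr => j _.
rewrite /grad_psi normrM.
have qn : q != 0 by rewrite qE mulf_neq0 ?invr_eq0 // gt_eqF.
have [->|wj0] := eqVneq (w j) 0.
  by rewrite sgr0 !normr0 mul0r !powR0 // gt_eqF.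
have -> : `|Num.sg (w j)| = 1 by rewrite normr_sg wj0.
by rewrite mul1r norm_powR ?normr_id // -powRrM hq.
Qed.

Lemma inner_grad_le (p q : R) (w u : vec) : 1 < p -> p^-1 + q^-1 = 1 ->
  inner (grad_psi p w) u <= pnorm p w `^ (p - 1) * pnorm p u.
Proof.
move=> p1 pq; apply: le_trans (ler_norm _) _.
rewrite inner_sym mulrC -(@grad_pnorm p q w p1 pq); exact: abs_inner_le.
Qed.

Lemma finite_pos_min (n : nat) (f : 'I_n -> R) : (0 < n)%N -> (forall i, 0 < f i) ->
  exists m, 0 < m /\ forall i, m <= f i.
Proof.
move=> n0 hf; set S := \sum_(i < n) (f i)^-1.
have hi : forall i, (f i)^-1 <= S.
  move=> i; rewrite /S (bigD1 i) //= lerDl; apply: sumr_ge0 => k _.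
  by rewrite invr_ge0 ltW.
have S0 : 0 < S by apply: lt_le_trans (hi (Ordinal n0)); rewrite invr_gt0.
exists S^-1; split; first by rewrite invr_gt0.
move=> i; rewrite -[f i]invrK lef_pV2 ?posrE ?invr_gt0 //.
Qed.

Lemma ln_ev (M : R) : \forall t \near \oo, M <= ln t%:R.
Proof.
exists (Num.Def.trunc (expR M)).+1 => // t /= ht.
have h1 : expR M < t%:R.
  apply: lt_le_trans (truncnS_gt _) _; rewrite ler_nat; exact: ht.
rewrite -[M]expRK ler_ln ?posrE ?expR_gt0 //; last by apply: lt_trans h1; exact: expR_gt0.
exact: ltW.
Qed.

End Asym.



Section Loss.
Variables (R : realType) (d n : nat) (x : 'I_n -> vec R d) (y : 'I_n -> R).
Local Notation vec := (vec R d).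
Local Notation inner := (@inner R d).
Local Notation L := (expL x y).

Lemma L_ge0 (v : vec) : 0 <= L v.
Proof.
apply: mulr_ge0; first by rewrite invr_ge0 ler0n.
by apply: sumr_ge0 => i _; exact: expR_ge0.
Qed.

Lemma L_scale_bound (v : vec) (m r : R) : (0 < n)%N -> 0 <= r ->
  (forall i, m <= y i * inner (x i) v) -> L (fun j => r * v j) <= expR (- (r * m)).
Proof.
move=> n0 r0 hm.
have : \sum_(i < n) expR (- (y i * inner (fun j => r * v j) (x i)))
        <= \sum_(i < n) expR (- (r * m)).
  apply: ler_sum => i _; rewrite ler_expR lerN2 inner_scale inner_sym.
  have := hm i; nra.
rewrite sumr_const card_ord => h.
rewrite /expL; apply: le_trans (ler_wpM2l _ h) _; first by rewrite invr_ge0 ler0n.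
have nz : n%:R != 0 :> R by rewrite pnatr_eq0 -lt0n.
rewrite -mulr_natl; apply: le_trans (_ : _ <= expR (- (r * m))) _ => //; rewrite le_eqVlt; apply/orP; left; apply/eqP; field; exact: nz.

Qed.

Lemma margin_le (p q C : R) (v : vec) i : 1 < p -> p^-1 + q^-1 = 1 ->
  (y i = 1 \/ y i = -1) -> pnorm q (x i) <= C ->
  y i * inner (x i) v <= pnorm p v * C.
Proof.
move=> p1 pq hy hC.
apply: le_trans (ler_norm _) _.
have -> : `|y i * inner (x i) v| = `|inner v (x i)|.
  by rewrite normrM inner_sym; case: hy => ->; rewrite ?normrN normr1 mul1r.
apply: le_trans (@abs_inner_le R d p q v (x i) p1 pq) _.
by rewrite ler_wpM2l // pnorm_ge0.
Qed.

Lemma lower_L (p q C : R) (v : vec) : 1 < p -> p^-1 + q^-1 = 1 -> (0 < n)%N ->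
  (forall i, y i = 1 \/ y i = -1) -> (forall i, pnorm q (x i) <= C) ->
  n%:R^-1 * expR (- (C * pnorm p v)) <= L v.
Proof.
move=> p1 pq n0 hy hC; set i0 : 'I_n := Ordinal n0.
rewrite /expL ler_wpM2l ?invr_ge0 ?ler0n //.
apply: le_trans (_ : expR (- (y i0 * inner v (x i0))) <= _).
  rewrite ler_expR lerN2 inner_sym [C * _]mulrC.
  exact: (@margin_le p q C v i0 p1 pq (hy i0) (hC i0)).
rewrite (bigD1 i0) //= lerDl; apply: sumr_ge0 => i _; exact: expR_ge0.
Qed.

End Loss.



Lemma upper_part (R : realType) (d n : nat) (p q eta : R)
  (x : 'I_n -> vec R d) (y : 'I_n -> R) (w : nat -> vec R d) (gam : R) :
  1 < p -> p^-1 + q^-1 = 1 -> (0 < n)%N -> 0 < eta ->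
  pGD p eta x y w ->
  (forall t, convex_on (segment (w t) (w t.+1))
               (fun v => psi p v - eta * expL x y v)) ->
  0 < gam ->
  (forall g', g' < gam -> exists m (v : vec R d),
    g' < m /\ pnorm p v <= 1 /\ forall i, m <= y i * inner (x i) v) ->
  forall e : R, 0 < e -> \forall t \near \oo,
      pnorm p (w t) / ln t%:R <= gam^-1 * (p / (p - 1)) + e.
Proof.
move=> p1 pq n0 eta0 hgd hconv gpos getdir.
have p0 : 0 < p by lra.
have tpos : forall t : nat, 1 <= ln (t%:R : R) -> 0 < (t%:R : R).
  move=> t ht; have [t0|tn0] := eqVneq t 0%N.
    have : ln (t%:R : R) = 0 by rewrite t0 ln0.
    lra.
  by rewrite ltr0n lt0n.
move=> e e0.
set q' := p / (p - 1).
have pm1 : 0 < p - 1 by lra.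
have pn0 : p != 0 by rewrite gt_eqF.
have pm10 : p - 1 != 0 by rewrite gt_eqF.
have q'p : 0 < q' by rewrite /q' divr_gt0.
have ip1 : p^-1 < 1 by rewrite invf_lt1.
have den : 0 < q' / gam + e / 2 by apply: addr_gt0; [exact: divr_gt0 | lra].
set g' := q' / (q' / gam + e / 2).
have g'p : 0 < g' by rewrite /g' divr_gt0.
have g'lt : g' < gam.
  rewrite /g' ltr_pdivrMr //.
  have -> : gam * (q' / gam + e / 2) = q' + gam * e / 2 by field; rewrite gt_eqF.
  have : 0 < gam * e by apply: mulr_gt0.
  lra.
have [m2 [v2 [hm2 [hv2 hmv2]]]] := getdir g' g'lt.
have m2p : 0 < m2 by lra.
have hqm : q' / m2 <= q' / gam + e / 2.
  have -> : q' / gam + e / 2 = q' / g'.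
    by rewrite /g' invf_div mulrCA mulfV ?mulr1 // gt_eqF.
  rewrite ler_pM2l // lef_pV2 ?posrE //; exact: ltW.
set c := q' / m2 + e / 2.
have c0 : 0 < c by rewrite /c; apply: addr_gt0; [exact: divr_gt0 | lra].
have hcgoal : c <= gam^-1 * q' + e.
  rewrite /c [gam^-1 * q']mulrC; lra.
set G0 := grad_psi p (w 0%N).
set B := `|inner G0 v2|.
set K0 := `|psi p (w 0%N)| + `|inner G0 (w 0%N)|.
have K00 : 0 <= K0 by apply: addr_ge0; exact: normr_ge0.
have hBm : 0 <= B / m2 by apply: divr_ge0; [exact: normr_ge0 | exact: (ltW m2p)].
set W := K0 + eta + B / m2.
have eW : W = K0 + eta + B / m2 by [].
have W0 : 0 <= W by rewrite /W; lra.
set a0 := (1 - p^-1) * (e / 2).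
have a0p : 0 < a0 by rewrite /a0 mulr_gt0 //; lra.
set Z0 := W / a0 + 1.
have Wa : 0 <= W / a0 by apply: divr_ge0; [exact: W0 | exact: (ltW a0p)].
have Z0p : 0 < Z0 by rewrite /Z0; lra.
set M := Num.max 1 (Z0 `^ (p - 1)^-1 / c).
move: (ln_ev R M); apply: filterS => t ht.
set X := ln t%:R.
have XM : M <= X := ht.
have M1 : 1 <= M by rewrite le_max lexx.
have M2 : Z0 `^ (p - 1)^-1 / c <= M by rewrite le_max lexx orbT.
have X1 : 1 <= X by lra.
have X0 : 0 < X by lra.
have tp := tpos t X1.
set N := pnorm p (w t).
have N0 : 0 <= N := pnorm_ge0 _ _ _ _.
suff hN : N <= c * X.
  rewrite ler_pdivrMr //; apply: le_trans hN _.
  by rewrite ler_pM2r.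
rewrite leNgt; apply/negP => hN.
set r := X / m2.
have r0 : 0 < r by rewrite /r divr_gt0.
set u := fun j => r * v2 j.
have eqa : X * a0 = (1 - p^-1) * (c * X) - r.
  by rewrite /a0 /c /r /q'; field; rewrite !gt_eqF.
have e3 : Z0 * (X * a0) = (W + a0) * X by rewrite /Z0; field; rewrite gt_eqF.
have e5 : r * B = X * (B / m2) by rewrite /r; field; rewrite gt_eqF.
have hreg : eta * t%:R * expL x y (w t) + Dp R d p u (w t) <=
    Dp R d p u (w 0%N) + eta * t%:R * expL x y u :=
  @regret R d n p eta x y w u p1 eta0 hgd hconv t.
have hLu : expL x y u <= expR (- (r * m2)) := @L_scale_bound R d n x y v2 m2 r n0 (ltW r0) hmv2.
have hrm : r * m2 = X by rewrite /r divfK // gt_eqF.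
have htX : t%:R * expR (- X) = 1.
  by rewrite expRN /X lnK ?posrE // mulfV // gt_eqF.
have etp : 0 <= eta * t%:R by rewrite mulr_ge0 // ltW.
have hLu' : eta * t%:R * expL x y u <= eta.
  by apply: le_trans (ler_wpM2l etp hLu) _; rewrite hrm -mulrA htX mulr1.
have hLw : 0 <= eta * t%:R * expL x y (w t) by rewrite mulr_ge0 // L_ge0.
set S := \sum_(j < d) `|w t j| `^ p.
set P := N `^ (p - 1).
have P0 : 0 <= P := powR_ge0 _ _.
have hS : S = N * P by rewrite /P mulr_powRB1 // /N pnorm_pow.
have hGw : inner (grad_psi p (w t)) (w t) = S by rewrite grad_psi_self.
have hpu : pnorm p u <= r.
  rewrite /u pnorm_scale //; last exact: ltW.
  by rewrite -[X in _ <= X]mulr1 ler_wpM2l // ltW.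
have hGu : inner (grad_psi p (w t)) u <= P * r.
  apply: le_trans (@inner_grad_le R d p q (w t) u p1 pq) _.
  by rewrite -/N -/P ler_wpM2l.
have hDwt : Dp R d p u (w t) >= psi p u - p^-1 * S - P * r + S.
  rewrite /Dp hGw (_ : psi p (w t) = p^-1 * S) //; clear -hGu; lra.
have hDw0 : Dp R d p u (w 0%N) <= psi p u + K0 + r * B.
  rewrite /Dp /u inner_scaler -/G0 -/u.
  have h1 : - (r * inner G0 v2) <= r * B.
    rewrite -mulrN ler_pM2l // /B -normrN; exact: ler_norm.
  have h2 : - psi p (w 0%N) <= `|psi p (w 0%N)|.
    by rewrite -normrN; exact: ler_norm.
  have h3 : inner G0 (w 0%N) <= `|inner G0 (w 0%N)| by apply: ler_norm.
  rewrite /K0; clear -h1 h2 h3; lra.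
have eP : P = N `^ (p - 1) by [].
clearbody S P N X M Z0 a0 W K0 B G0 c g' q' r u.
have hmain : S - p^-1 * S - P * r <= K0 + r * B + eta.
  by clear -hreg hLu' hLw hDwt hDw0; lra.
have hb1 : (1 - p^-1) * N - r >= X * a0.
  have hh : (1 - p^-1) * (c * X) <= (1 - p^-1) * N.
    by apply: ler_wpM2l; [clear -ip1; lra | clear -hN; lra].
  by rewrite eqa lerD2r.
have hcM : Z0 `^ (p - 1)^-1 <= N.
  have hh1 : Z0 `^ (p - 1)^-1 <= c * M.
    by rewrite -ler_pdivrMl // mulrC.
  have hh2 : c * M <= c * X by rewrite ler_pM2l.
  clear -hh1 hh2 hN.
  lra.
have hPZ : Z0 <= P.
  have := @ge0_ler_powR R (p - 1) (ltW pm1) (Z0 `^ (p - 1)^-1) N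
    ltac:(by rewrite nnegrE powR_ge0) ltac:(by rewrite nnegrE) hcM.
  by rewrite -powRrM mulVf // powRr1 -?eP //; exact: ltW.
have hprod : Z0 * (X * a0) <= P * ((1 - p^-1) * N - r).
  apply: ler_pM => //; [exact: ltW | by rewrite mulr_ge0 // ltW].
have e4 : P * ((1 - p^-1) * N - r) = S - p^-1 * S - P * r by rewrite hS; ring.
have i5 : X * (B / m2) + K0 + eta <= W * X.
  have hk : K0 + eta <= (K0 + eta) * X.
    have hk0 : 0 <= K0 + eta by clear -K00 eta0; lra.
    by rewrite ler_peMr.
  rewrite eW; clear -hk; lra.
have ha : 0 < a0 * X by apply: mulr_gt0.
clear -ha hmain hprod e3 e4 e5 i5; lra.
Qed.

Theorem lemma5 (R : realType) (d n : nat) (p q C eta : R)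
  (x : 'I_n -> vec R d) (y : 'I_n -> R) (w : nat -> vec R d) :
  1 < p -> p^-1 + q^-1 = 1 ->
  (0 < n)%N ->
  (forall i, y i = 1 \/ y i = -1) ->
  lin_separable x y ->
  (forall i, pnorm q (x i) <= C) ->
  0 < eta ->
  pGD p eta x y w ->
  (forall t, convex_on (segment (w t) (w t.+1))
               (fun v => psi p v - eta * expL x y v)) ->
  (exists K : R, \forall t \near \oo,
      C^-1 * (ln t%:R - p * ln (ln t%:R)) - K <= pnorm p (w t)) /\
  (forall e : R, 0 < e -> \forall t \near \oo,
      pnorm p (w t) / ln t%:R <= (max_margin p x y)^-1 * (p / (p - 1)) + e).
Proof.
move=> p1 pq n0 hy hsep hC eta0 hgd hconv.
have p0 : 0 < p by lra.
set i0 : 'I_n := Ordinal n0.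
set E := [set m : R | exists v : vec R d, pnorm p v <= 1 /\
                   forall i, m <= y i * inner (x i) v].
have gE : max_margin p x y = sup E by [].
have C0 : 0 <= C by apply: le_trans (hC i0); exact: pnorm_ge0.
have mle : forall v i, y i * inner (x i) v <= pnorm p v * C.
  by move=> v i; exact: (@margin_le R d n x y p q C v i p1 pq (hy i) (hC i)).
have hsup : has_sup E.
  split.
    exists 0, (fun _ => 0); split; first by rewrite (@pnorm_zero R d p p0).
    by move=> i; rewrite /Defs.inner big1 ?mulr0 // => j _; rewrite mulr0.
  exists C => m [v [hv hm]]; apply: le_trans (hm i0) _.
  apply: le_trans (mle v i0) _.
  have := @pnorm_ge0 R d p v; nra.
set gam := max_margin p x y.
have gpos : 0 < gam.
  case: hsep => v0 hv0.
  have [m0 [m0p hm0]] := @finite_pos_min R n (fun i => y i * inner (x i) v0) n0 hv0.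
  set s := (pnorm p v0 + 1)^-1.
  have s0 : 0 < s by rewrite invr_gt0; have := @pnorm_ge0 R d p v0; lra.
  have Es : E (s * m0).
    exists (fun j => s * v0 j); split.
      rewrite pnorm_scale //; last exact: ltW.
      have hN := @pnorm_ge0 R d p v0.
      have hs1 : s * (pnorm p v0 + 1) = 1 by rewrite /s mulVf // gt_eqF //; lra.
      nra.
    by move=> i; rewrite inner_scaler; have := hm0 i; nra.
  have hsm : 0 < s * m0 by apply: mulr_gt0.
  have : s * m0 <= gam by rewrite /gam gE; exact: (sup_upper_bound hsup Es).
  lra.
have getdir : forall g', g' < gam -> exists m (v : vec R d),
    g' < m /\ pnorm p v <= 1 /\ forall i, m <= y i * inner (x i) v.
  move=> g' hg.
  have [m [v [hv hm]] hlt] := @sup_adherent R E (gam - g') ltac:(by rewrite subr_gt0) hsup.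
  exists m, v; split => //.
  by move: hlt; rewrite -gE /gam; lra.
have [m1 [v1 [hm1 [hv1 hmv1]]]] := getdir (gam / 2) ltac:(lra).
have m1p : 0 < m1 by lra.
have Cp : 0 < C.
  have := hmv1 i0; have := mle v1 i0; have := @pnorm_ge0 R d p v1; nra.
have tpos : forall t : nat, 1 <= ln (t%:R : R) -> 0 < (t%:R : R).
  move=> t ht; have [t0|tn0] := eqVneq t 0%N.
    have : ln (t%:R : R) = 0 by rewrite t0 ln0.
    lra.
  by rewrite ltr0n lt0n.
split.
  set G0 := grad_psi p (w 0%N).
  set A := psi p v1.
  have A0 : 0 <= A.
    apply: mulr_ge0; first by rewrite invr_ge0 ltW.
    by apply: sumr_ge0 => j _; exact: powR_ge0.
  set B := `|inner G0 v1|.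
  set K0 := `|psi p (w 0%N)| + `|inner G0 (w 0%N)|.
  have mp : 0 < m1 `^ p by apply: powR_gt0.
  have hAm : 0 <= A / m1 `^ p by apply: divr_ge0 => //; exact: (ltW mp).
  have hBm : 0 <= B / m1 by apply: divr_ge0; [exact: normr_ge0 | exact: (ltW m1p)].
  have K00 : 0 <= K0 by apply: addr_ge0; exact: normr_ge0.
  set K2 := A / m1 `^ p + B / m1 + K0 + eta.
  have K2p : 0 < K2 by rewrite /K2; lra.
  exists (C^-1 * ln (n%:R * K2 / eta)).
  move: (ln_ev R 1); apply: filterS => t ht.
  set X := ln t%:R.
  have tp := tpos t ht.
  have X1 : 1 <= X := ht.
  set r := X / m1.
  have r0 : 0 < r by rewrite /r divr_gt0 //; lra.
  set u := fun j => r * v1 j.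
  have hreg : eta * t%:R * expL x y (w t) + Dp R d p u (w t) <=
      Dp R d p u (w 0%N) + eta * t%:R * expL x y u :=
    @regret R d n p eta x y w u p1 eta0 hgd hconv t.
  have hD := @Dp_ge0 R d p u (w t) p1.
  have hLu : expL x y u <= expR (- (r * m1)) := @L_scale_bound R d n x y v1 m1 r n0 (ltW r0) hmv1.
  have hrm : r * m1 = X by rewrite /r divfK // gt_eqF.
  have htX : t%:R * expR (- X) = 1.
    by rewrite expRN /X lnK ?posrE // mulfV // gt_eqF.
  have hLu' : eta * t%:R * expL x y u <= eta.
    have etp : 0 <= eta * t%:R by rewrite mulr_ge0 // ltW.
    by apply: le_trans (ler_wpM2l etp hLu) _; rewrite hrm -mulrA htX mulr1.
  have hDu0 : Dp R d p u (w 0%N) <= r `^ p * A + r * B + K0.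
    rewrite /Dp psi_scale; last exact: (ltW r0).
    rewrite inner_scaler -/G0.
    have h1 : - (r * inner G0 v1) <= r * B.
      rewrite -mulrN ler_pM2l // /B -normrN; exact: ler_norm.
    have h2 : - psi p (w 0%N) <= `|psi p (w 0%N)|.
      by rewrite -normrN; exact: ler_norm.
    have h3 : inner G0 (w 0%N) <= `|inner G0 (w 0%N)| by apply: ler_norm.
    rewrite /K0 -/A; lra.
  have X0 : 0 <= X by lra.
  have hrp : r `^ p = X `^ p / m1 `^ p.
    have im : 0 <= m1^-1 by rewrite invr_ge0 ltW.
    by rewrite /r (powRM _ X0 im) (@powRV R m1 p (ltW m1p)).
  have hXp : X <= X `^ p := le1r_powR X1 (ltW p1).
  have hXp1 : 1 <= X `^ p by lra.
  have hbound : eta * t%:R * expL x y (w t) <= K2 * X `^ p.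
    have e1 : r `^ p * A = X `^ p * (A / m1 `^ p) by rewrite hrp; field; rewrite gt_eqF.
    have e2 : r * B = X * (B / m1) by rewrite /r; field; rewrite gt_eqF.
    have i2 : X * (B / m1) <= X `^ p * (B / m1) by rewrite ler_wpM2r.
    have i3 : K0 + eta <= X `^ p * (K0 + eta) by rewrite ler_peMl //; lra.
    have e4 : K2 * X `^ p = X `^ p * (A / m1 `^ p) + X `^ p * (B / m1) + X `^ p * (K0 + eta).
      by rewrite /K2; ring.
    have s1 : eta * t%:R * expL x y (w t) <= r `^ p * A + r * B + K0 + eta by lra.
    lra.
  have hlow := @lower_L R d n x y p q C (w t) p1 pq n0 hy hC.
  set N := pnorm p (w t).
  have nR : 0 < n%:R :> R by rewrite ltr0n.
  have h1 : eta * t%:R * (n%:R^-1 * expR (- (C * N))) <= K2 * X `^ p.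
    apply: le_trans hbound; apply: ler_wpM2l; last exact: hlow.
    by rewrite mulr_ge0 // ltW.
  have h2 : expR (X - C * N) <= n%:R * K2 / eta * X `^ p.
    rewrite expRD /X lnK ?posrE // -/X.
    rewrite -(@ler_pM2l _ (eta / n%:R)); last by rewrite divr_gt0.
    have -> : eta / n%:R * (t%:R * expR (- (C * N))) =
              eta * t%:R * (n%:R^-1 * expR (- (C * N))) by field; rewrite gt_eqF.
    have -> : eta / n%:R * (n%:R * K2 / eta * X `^ p) = K2 * X `^ p.
      by field; rewrite !gt_eqF.
    exact: h1.
  have Xpp : 0 < X `^ p by rewrite powR_gt0 //; lra.
  have Yp : 0 < n%:R * K2 / eta by rewrite divr_gt0 // mulr_gt0.
  have h3 : X - C * N <= ln (n%:R * K2 / eta) + p * ln X.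
    have h2' : ln (expR (X - C * N)) <= ln (n%:R * K2 / eta * X `^ p).
      by rewrite ler_ln ?posrE ?expR_gt0 ?(mulr_gt0 Yp Xpp).
    by rewrite expRK lnM ?posrE // ln_powR in h2'.
  rewrite -mulrBr -(ler_pM2l Cp) mulrA mulfV ?gt_eqF // mul1r; lra.
exact: (@upper_part R d n p q eta x y w gam p1 pq n0 eta0 hgd hconv gpos getdir).
Qed.
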